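(* Let $\mathcal{A}$ be a pca and let $b\in\mathcal{A}$ satisfy $ba\simeq aa$ for all $a\in\mathcal{A}$. Then $b$ has a total extension in $\mathcal{A}$ if and only if every element of $\mathcal{A}$ has a total extension in $\mathcal{A}$.
   Context: A pca is a set $\mathcal{A}$ with partial binary application $ab$ (left associative, strict) containing $k,s$ with $kab=a$, $sab\downarrow$, $sabc\simeq ac(bc)$; $\simeq$ means both sides undefined or both defined and equal. An element $f$ is total if $fa$ is defined for all $a$; $f$ is a total extension of $b$ if $f$ is total and $ba\downarrow\Rightarrow fa=ba$ for all $a$. *)

(* Defs.v *)
(* A pca: carrier A with partial application modelled as
   app : A -> A -> option A (None = undefined). *)

Record pca := {
  carrier :> Type;
  app : carrier -> carrier -> option carrier;
  pk : carrier;
  ps : carrier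
}.

Definition papp {A : pca} (x y : option (carrier A)) : option (carrier A) :=
  match x, y with
  | Some a, Some b => app A a b
  | _, _ => None
  end.

(* Kleene equality on option: both undefined or both defined and equal,
   which for option is just Leibniz equality. *)
Definition kleq {T : Type} (x y : option T) : Prop := x = y.

Definition is_pca (A : pca) : Prop :=
  (forall a b : carrier A,
      papp (papp (Some (pk A)) (Some a)) (Some b) = Some a) /\
  (forall a b : carrier A,
      exists d, papp (papp (Some (ps A)) (Some a)) (Some b) = Some d) /\
  (forall a b c : carrier A,
      kleq (papp (papp (papp (Some (ps A)) (Some a)) (Some b)) (Some c))
           (papp (papp (Some a) (Some c)) (papp (Some b) (Some c)))).

Definition total {A : pca} (f : carrier A) : Prop :=
  forall a : carrier A, exists d, app A f a = Some d.

Definition total_extension {A : pca} (f b : carrier A) : Prop :=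
  total f /\ (forall a d : carrier A, app A b a = Some d -> app A f a = Some d).

(* Main.v *)
Require Import Defs.

Lemma Klem (A : pca) (HA : is_pca A) (a : carrier A) :
  exists ka, app A (pk A) a = Some ka /\ forall y, app A ka y = Some a.
Proof.
  destruct HA as [H1 _].
  pose proof (H1 a a) as H. simpl in H.
  destruct (app A (pk A) a) as [x|] eqn:E; [|discriminate].
  exists x; split; [reflexivity|].
  intro y. pose proof (H1 a y) as H'. simpl in H'. rewrite E in H'. exact H'.
Qed.

Lemma Slem (A : pca) (HA : is_pca A) (a b : carrier A) :
  exists sa sab, app A (ps A) a = Some sa /\ app A sa b = Some sab /\
    forall c, app A sab c = papp (app A a c) (app A b c).
Proof.
  destruct HA as [_ [H2 H3]].
  destruct (H2 a b) as [d H]. simpl in H.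
  destruct (app A (ps A) a) as [x|] eqn:E; [|discriminate].
  exists x, d; split; [reflexivity|]; split; [exact H|].
  intro c. pose proof (H3 a b c) as H'. unfold kleq in H'. simpl in H'.
  rewrite E, H in H'. simpl in H'. exact H'.
Qed.

Theorem mainTheorem14 (A : pca) (HA : is_pca A) (b : carrier A)
  (Hb : forall a : carrier A, kleq (app A b a) (app A a a)) :
  (exists f : carrier A, total_extension f b) <->
  (forall c : carrier A, exists f : carrier A, total_extension f c).
Proof.
  split; [|intro H; exact (H b)].
  intros [f [Ftot Fext]] c.
  destruct (Klem A HA c) as [kc [Ekc Hkc]].
  destruct (Klem A HA (ps A)) as [ks [Eks Hks]].
  destruct (Klem A HA kc) as [kkc [Ekkc Hkkc]].
  destruct (Klem A HA f) as [kf [Ekf Hkf]].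
  destruct (Slem A HA ks kkc) as [s1 [P1 [_ [_ HP1]]]].
  destruct (Slem A HA P1 (pk A)) as [s2 [P2 [_ [_ HP2]]]].
  destruct (Slem A HA kf P2) as [s3 [h [_ [_ Hh]]]].
  assert (Ht : forall a, exists t, app A P2 a = Some t /\ app A t t = app A c a).
  { intro a.
    destruct (Klem A HA a) as [ka [Eka Hka]].
    destruct (Slem A HA kc ka) as [skc [t [Eskc [Et Ht]]]].
    exists t. split.
    - rewrite HP2, HP1, Hks, Hkkc. simpl. rewrite Eskc. simpl. rewrite Eka. exact Et.
    - rewrite Ht, Hkc, Hka. reflexivity. }
  exists h. split.
  - intro a. destruct (Ht a) as [t [E1 _]].
    rewrite Hh, Hkf, E1. simpl. apply Ftot.
  - intros a d Hd. destruct (Ht a) as [t [E1 E2]].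
    rewrite Hh, Hkf, E1. simpl. apply Fext.
    rewrite (Hb t). unfold kleq in *. rewrite E2. exact Hd.
Qed.
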